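(* Let $1\le\ell\le r$ and $0\le k\le\ell-1$. Every ideal $I$ of $R_\ell$ with $J_{\ell,k+1}(0)\subseteq I\subseteq J_{\ell,k}(0)$ is of the form $$I=J_{\ell,k+1}(0)+(nF_{\ell,k})=(nF_{\ell,k},F_{\ell,k+1},F_{\ell,k+2},\dots,F_{\ell,\ell-1})$$ for some $n\in\mathbb{Z}$.
   Context: Fix a prime $p$ and an integer $r\ge0$. For $0\le k\le r$ let $R_k$ be the commutative ring which is free as a $\mathbb{Z}$-module with basis $X_{k,0},\dots,X_{k,k}$ and multiplication $X_{k,i}X_{k,j}=p^{k-\max(i,j)}X_{k,\min(i,j)}$; thus $X_{k,k}=1$, and an integer $n$ is identified with $nX_{k,k}$. For $0\le i\le\ell\le r$ put $F_{\ell,i}=X_{\ell,i}-p^{\ell-i}\in R_\ell$. For $0\le k\le\ell$ and $x\in\mathbb{Z}$, $J_{\ell,k}(x)\subseteq R_\ell$ is the ideal generated by $x,F_{\ell,k},F_{\ell,k+1},\dots,F_{\ell,\ell-1}$ if $k\le\ell-1$, and $J_{\ell,\ell}(x)=xR_\ell$ (so $J_{\ell,\ell}(0)=0$). *)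

(* Defs.v *)
From HB Require Import structures.
From mathcomp Require Import all_boot all_order all_algebra.
Unset Printing Implicit Defensive.
Import Order.TTheory GRing.Theory Num.Theory.
Local Open Scope ring_scope.

(* Elements of R_l are coefficient vectors w.r.t. the Z-basis X_{l,0},...,X_{l,l}. *)
Definition Rel (l : nat) := 'rV[int]_(l.+1).

(* Basis element X_{l,i} (for i <= l; out-of-range i gives 0). *)
Definition Xb (l i : nat) : Rel l := \row_(m < l.+1) (if (m == i :> nat) then 1 else 0).

(* Multiplication: X_{l,i} X_{l,j} = p^(l - max(i,j)) X_{l,min(i,j)}, extended bilinearly. *)
Definition mulR (p l : nat) (x y : Rel l) : Rel l :=
  \row_(m < l.+1) \sum_(i < l.+1) \sum_(j < l.+1)
     (if (minn i j == m :> nat) then x 0 i * y 0 j * (p%:Z) ^+ (l - maxn i j) else 0).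

(* An integer n is identified with n X_{l,l}. *)
Definition intR (l : nat) (n : int) : Rel l := n *: Xb l l.

Definition FF (p l i : nat) : Rel l := Xb l i - intR l ((p%:Z) ^+ (l - i)).

Definition gen_ideal (p l : nat) (gs : seq (Rel l)) (x : Rel l) : Prop :=
  exists cs : seq (Rel l), size cs = size gs /\
    x = \sum_(i < size gs) mulR p l (nth 0 cs i) (nth 0 gs i).

Definition JJ (p l k : nat) (x : int) : Rel l -> Prop :=
  gen_ideal p l ((intR l x) :: [seq FF p l i | i <- iota k (l - k)]).

Definition is_ideal (p l : nat) (I : Rel l -> Prop) : Prop :=
  [/\ I 0,
      (forall x y, I x -> I y -> I (x + y)),
      (forall x, I x -> I (- x)) &
      (forall a x, I x -> I (mulR p l a x))].

(* Main.v *)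
Require Import Defs.
From HB Require Import structures.
From mathcomp Require Import all_boot all_order all_algebra.
Import Order.TTheory GRing.Theory Num.Theory.
Local Open Scope ring_scope.
From Stdlib Require Import Wf_nat Classical.
From mathcomp Require Import zify ring.

Section S.
Variables (p l : nat).
Local Notation mulR := (mulR p l).
Local Notation R := (Rel l).

Lemma mulRDl (x y z : R) : mulR (x + y) z = mulR x z + mulR y z.
Proof.
apply/rowP=> m; rewrite !mxE -big_split; apply eq_bigr=> i _.
rewrite -big_split; apply eq_bigr=> j _; case: ifP=> _; rewrite ?mxE ?addr0 //.
by rewrite !mulrDl.
Qed.

Lemma mulRDr (x y z : R) : mulR x (y + z) = mulR x y + mulR x z.
Proof.
apply/rowP=> m; rewrite !mxE -big_split; apply eq_bigr=> i _.
rewrite -big_split; apply eq_bigr=> j _; case: ifP=> _; rewrite ?mxE ?addr0 //.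
by rewrite mulrDr mulrDl.
Qed.

Lemma mulRZl (a : int) (x y : R) : mulR (a *: x) y = a *: mulR x y.
Proof.
apply/rowP=> m; rewrite !mxE mulr_sumr; apply eq_bigr=> i _.
rewrite mulr_sumr; apply eq_bigr=> j _; case: ifP=> _; rewrite ?mxE ?mulr0 //.
by rewrite !mulrA.
Qed.

Lemma mulRZr (a : int) (x y : R) : mulR x (a *: y) = a *: mulR x y.
Proof.
apply/rowP=> m; rewrite !mxE mulr_sumr; apply eq_bigr=> i _.
rewrite mulr_sumr; apply eq_bigr=> j _; case: ifP=> _; rewrite ?mxE ?mulr0 //.
by rewrite mulrCA !mulrA.
Qed.

Lemma mulR0l (y : R) : mulR 0 y = 0.
Proof. by have := mulRZl 0 0 y; rewrite !scale0r. Qed.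
Lemma mulR0r (y : R) : mulR y 0 = 0.
Proof. by have := mulRZr 0 y 0; rewrite !scale0r. Qed.

Lemma mulR_suml I (r : seq I) (P : pred I) (F : I -> R) y :
  mulR (\sum_(i <- r | P i) F i) y = \sum_(i <- r | P i) mulR (F i) y.
Proof. exact: (big_morph (fun x => mulR x y) (fun a b => mulRDl a b y) (mulR0l y)). Qed.
Lemma mulR_sumr I (r : seq I) (P : pred I) (F : I -> R) y :
  mulR y (\sum_(i <- r | P i) F i) = \sum_(i <- r | P i) mulR y (F i).
Proof. exact: (big_morph (fun x => mulR y x) (fun a b => mulRDr y a b) (mulR0r y)). Qed.

Lemma rowdec (x : R) : x = \sum_(i < l.+1) x 0 i *: Xb l i.
Proof.
apply/rowP=> m; rewrite summxE (bigD1 m) //= big1 => [|i ne]; rewrite !mxE.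
  by rewrite eqxx mulr1 addr0.
by case: eqP => [/val_inj e|]; [rewrite e eqxx in ne | rewrite mulr0].
Qed.

Lemma mulXX (i j : nat) : (i <= l)%N -> (j <= l)%N ->
  mulR (Xb l i) (Xb l j) = (p%:Z ^+ (l - maxn i j)) *: Xb l (minn i j).
Proof.
move=> hi hj; apply/rowP=> m; rewrite !mxE.
rewrite (bigD1 (Ordinal (hi : (i < l.+1)%N))) //= [X in _ + X]big1 ?addr0; last first.
  move=> i' ne; apply: big1 => j' _; case: ifP => // _; rewrite !mxE.
  by case: eqP => [e|]; [rewrite -(inj_eq val_inj) /= e eqxx in ne | rewrite !mul0r].
rewrite (bigD1 (Ordinal (hj : (j < l.+1)%N))) //= [X in _ + X]big1 ?addr0; last first.
  move=> j' ne; case: ifP => // _; rewrite !mxE.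
  have -> : (j' == j :> nat) = false by apply: contraNF ne => /eqP e; apply/eqP/val_inj.
  by rewrite mulr0 mul0r.
rewrite !mxE !eqxx !mul1r eq_sym.
by case: ifP; rewrite ?mulr1 ?mulr0.
Qed.


Lemma gen_ind (P : R -> Prop) (gs : seq R) :
  P 0 -> (forall x y, P x -> P y -> P (x + y)) ->
  (forall a i, (i < size gs)%N -> P (mulR a (nth 0 gs i))) ->
  forall x, gen_ideal p l gs x -> P x.
Proof.
move=> P0 PD Pg x [cs [_ ->]]; apply: big_ind => // i _; exact: Pg.
Qed.

Lemma gi_0 gs : gen_ideal p l gs 0.
Proof.
exists (mkseq (fun _ => 0) (size gs)); split; first by rewrite size_mkseq.
by rewrite big1 // => i _; rewrite nth_mkseq // mulR0l.
Qed.

Lemma gi_add gs x y : gen_ideal p l gs x -> gen_ideal p l gs y -> gen_ideal p l gs (x + y).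
Proof.
move=> [c1 [_ ->]] [c2 [_ ->]].
exists (mkseq (fun i => nth 0 c1 i + nth 0 c2 i) (size gs)); split; first by rewrite size_mkseq.
rewrite -big_split; apply: eq_bigr => i _; by rewrite nth_mkseq // mulRDl.
Qed.

Lemma gi_scale gs (z : int) x : gen_ideal p l gs x -> gen_ideal p l gs (z *: x).
Proof.
move=> [c1 [_ ->]].
exists (mkseq (fun i => z *: nth 0 c1 i) (size gs)); split; first by rewrite size_mkseq.
rewrite scaler_sumr; apply: eq_bigr => i _; by rewrite nth_mkseq // mulRZl.
Qed.

Lemma gi_gen gs a i : (i < size gs)%N -> gen_ideal p l gs (mulR a (nth 0 gs i)).
Proof.
move=> hi.
exists (mkseq (fun j => if j == i then a else 0) (size gs)); split; first by rewrite size_mkseq.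
rewrite (bigD1 (Ordinal hi)) //= big1 ?addr0 => [|j ne]; first by rewrite nth_mkseq // eqxx.
rewrite nth_mkseq //.
have -> : (j == i :> nat) = false by apply: contraNF ne => /eqP e; apply/eqP/val_inj.
by rewrite mulR0l.
Qed.

Lemma gi_sum gs I (r : seq I) (P : pred I) (F : I -> R) :
  (forall i, P i -> gen_ideal p l gs (F i)) -> gen_ideal p l gs (\sum_(i <- r | P i) F i).
Proof. move=> h; apply: big_ind => //; [exact: gi_0 | exact: gi_add]. Qed.

Lemma mulR1l (y : R) : mulR (Xb l l) y = y.
Proof.
have e := rowdec y.
rewrite [in RHS]e.
rewrite [in LHS]e mulR_sumr; apply: eq_bigr => i _.
have hi : (i <= l)%N by rewrite -ltnS.
rewrite mulRZr (@mulXX l i (leqnn l) hi).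
by rewrite (maxn_idPl hi) (minn_idPr hi) subnn expr0 scale1r.
Qed.

Lemma mulRint (z : int) (y : R) : mulR (intR l z) y = z *: y.
Proof. by rewrite /intR mulRZl mulR1l. Qed.

Lemma gi_gen1 gs i : (i < size gs)%N -> gen_ideal p l gs (nth 0 gs i).
Proof. move=> hi; rewrite -(mulR1l (nth 0 gs i)); exact: gi_gen. Qed.

End S.

Section M.
Variables (p l k : nat).
Hypothesis hk : (k < l)%N.
Local Notation R := (Rel l).
Local Notation F := (FF p l k).
Local Notation G := [seq FF p l i | i <- iota k.+1 (l - k.+1)].
Local Notation J1 := (gen_ideal p l (intR l 0 :: G)).
Definition Pd (x : R) := exists c : int, J1 (x - c *: F).

Lemma nthG j : (j < l - k.+1)%N -> nth 0 G j = FF p l (k.+1 + j).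
Proof. by move=> hj; rewrite (nth_map 0%N) ?size_iota // nth_iota. Qed.

Lemma FFl : FF p l l = 0.
Proof. by rewrite /FF /intR subnn expr0 scale1r subrr. Qed.

Lemma J1_FF i : (k < i)%N -> (i <= l)%N -> J1 (FF p l i).
Proof.
move=> h1 h2; case: (ltngtP i l) => [hl||->]; last by rewrite FFl; exact: gi_0.
- have e : i = (k.+1 + (i - k.+1))%N by lia.
  have hj : (i - k.+1 < l - k.+1)%N by lia.
  have := @gi_gen1 p l (intR l 0 :: G) (i - k.+1).+1.
  by rewrite /= nthG // -e; apply; rewrite size_map size_iota.
- by move=> h; lia.
Qed.

Lemma Pd0 : Pd 0.
Proof. by exists 0; rewrite scale0r subr0; exact: gi_0. Qed.

Lemma PdD x y : Pd x -> Pd y -> Pd (x + y).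
Proof.
move=> [c1 h1] [c2 h2]; exists (c1 + c2).
have -> : x + y - (c1 + c2) *: F = (x - c1 *: F) + (y - c2 *: F).
  by rewrite scalerDl opprD addrACA.
exact: gi_add.
Qed.

Lemma scaleBA (z c : int) (x y : R) : z *: x - (z * c) *: y = z *: (x - c *: y).
Proof. by rewrite scalerBr scalerA. Qed.

Lemma PdZ (z : int) x : Pd x -> Pd (z *: x).
Proof.
move=> [c h]. exists (z * c).
rewrite (scaleBA z c x F).
exact: gi_scale.
Qed.

Lemma PdJ1 x : J1 x -> Pd x.
Proof. by move=> h; exists 0; rewrite scale0r subr0. Qed.

Lemma mulRNr (x y : R) : mulR p l x (- y) = - mulR p l x y.
Proof. by rewrite -scaleN1r mulRZr scaleN1r. Qed.

Lemma PdX i : (i <= l)%N -> Pd (mulR p l (Xb l i) F).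
Proof.
move=> hi.
rewrite /FF /intR mulRDr mulRNr mulRZr !mulXX // ?(ltnW hk) //.
have -> : maxn i l = l by apply/maxn_idPr.
have -> : minn i l = i by apply/minn_idPl.
rewrite subnn expr0 scale1r.
case: (leqP i k) => hik.
  rewrite subrr; exact: Pd0.
exists (p%:Z ^+ (l - i)).
have -> : p%:Z ^+ (l - i) *: Xb l k - p%:Z ^+ (l - k) *: Xb l i -
   p%:Z ^+ (l - i) *: (Xb l k - p%:Z ^+ (l - k) *: Xb l l) = (- p%:Z ^+ (l - k)) *: FF p l i.
  apply/rowP => m; rewrite /FF /intR !mxE; ring.
apply: gi_scale; exact: J1_FF.
Qed.

Lemma PdM a : Pd (mulR p l a F).
Proof.
rewrite (@rowdec _ a) mulR_suml; apply: big_ind => //; [exact: Pd0 | exact: PdD |].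
move=> i _; rewrite mulRZl; apply: PdZ; apply: PdX; by rewrite -ltnS.
Qed.

Lemma decomp x : JJ p l k 0 x -> Pd x.
Proof.
rewrite /JJ; have -> : (l - k = (l - k.+1).+1)%N by lia.
move=> h; apply: (@gen_ind p l Pd _ _ _ _ _ h); [exact: Pd0 | exact: PdD |].
move=> a [|[|i]] /= hi.
- by rewrite /intR scale0r mulR0r; exact: Pd0.
- exact: PdM.
- apply: PdJ1; have := @gi_gen p l (intR l 0 :: G) a i.+1; apply.
  by move: hi; rewrite /= !size_map.
Qed.

End M.

Theorem lemma6 (p r l k : nat) (I : Rel l -> Prop) :
  prime p -> (1 <= l)%N -> (l <= r)%N -> (k <= l - 1)%N ->
  is_ideal p l I ->
  (forall x, JJ p l k.+1 0 x -> I x) ->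
  (forall x, I x -> JJ p l k 0 x) ->
  exists n : int,
    (forall x, I x <->
       exists a b, JJ p l k.+1 0 a /\ gen_ideal p l [:: n *: FF p l k] b /\ x = a + b) /\
    (forall x, I x <->
       gen_ideal p l ((n *: FF p l k) :: [seq FF p l i | i <- iota k.+1 (l - k.+1)]) x).
Proof.
move=> _ hl1 _ hkl [I0 ID IN IM] hJI hIJ.
have hk : (k < l)%N by lia.
set F := FF p l k.
have IZ : forall (z : int) x, I x -> I (z *: x).
  by move=> z x hx; rewrite -(mulRint p); apply: IM.
have CZ : forall (z c : int), I (c *: F) -> I ((z * c) *: F).
  by move=> z c h; rewrite -scalerA; apply: IZ.
have Isub : forall x y, I x -> I y -> I (x - y).
  by move=> x y hx hy; apply: ID => //; apply: IN.
have [n [In Cn]] : exists n : int, I (n *: F) /\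
     forall c, I (c *: F) -> exists m, c = m * n.
  case: (classic (exists c : int, c != 0 /\ I (c *: F))) => [[c0 [nz0 h0]]|hno].
  - pose P (m : nat) := (0 < m)%N /\ I (m%:Z *: F).
    have P0 : P (absz c0).
      split; first by rewrite absz_gt0.
      rewrite abszE; case: (ltrP 0 c0) => hc.
        by rewrite gtr0_norm.
      rewrite ler0_norm // -mulN1r; exact: CZ.
    have [n0 [[[hn0 In0] hmin] _]] :=
      dec_inh_nat_subset_has_unique_least_element P (fun n => classic (P n)) (ex_intro _ _ P0).
    exists n0%:Z; split => // c hc.
    have nz : n0%:Z != 0 by rewrite eqz_nat -lt0n.
    have Ir : I ((c %% n0%:Z)%Z *: F).
      have -> : (c %% n0%:Z)%Z *: F = c *: F - ((c %/ n0%:Z)%Z * n0%:Z) *: F.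
        by rewrite {2}(divz_eq c n0%:Z) scalerDl addrC addKr.
      by apply: Isub => //; apply: CZ.
    exists (c %/ n0%:Z)%Z.
    have r0 : (c %% n0%:Z)%Z = 0.
      have ge := modz_ge0 c nz.
      have lt := @ltz_pmod c n0%:Z (hn0 : (0 < n0%:Z)).
      apply/eqP; apply/negPn/negP => rnz.
      have Pr : P (absz (c %% n0%:Z)%Z).
        split; first by rewrite absz_gt0.
        by rewrite gez0_abs.
      have := hmin _ Pr.
      have : (absz (c %% n0%:Z)%Z < n0)%N by rewrite -ltz_nat gez0_abs.
      lia.
    by rewrite {1}(divz_eq c n0%:Z) r0 addr0.
  - exists 0; split; first by rewrite scale0r.
    move=> c hc; exists 0; rewrite mul0r.
    by apply/eqP; apply/negPn/negP => nz; apply: hno; exists c.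
have key : forall x, I x -> exists a (m : int),
    JJ p l k.+1 0 a /\ x = a + m *: (n *: F).
  move=> x hx; have [c hc] := @decomp p l k hk x (hIJ x hx).
  have : I (c *: F).
    have -> : c *: F = x - (x - c *: F) by rewrite opprB addrC subrK.
    by apply: Isub => //; apply: hJI.
  move/Cn => [m em]; exists (x - c *: F), m; split => //.
  by rewrite scalerA -em subrK.
exists n; split => x; split.
- move=> /key [a [m [ha ->]]]; exists a, (mulR p l (intR l m) (n *: F)).
  split => //; split; last by rewrite mulRint.
  exact: (@gi_gen p l [:: n *: F] _ 0).
- move=> [a [b [ha [hb ->]]]]; apply: (ID); first exact: hJI.
  apply: (@gen_ind p l I _ I0 ID _ _ hb) => a' [|i] //= _; exact: IM.
- move=> /key [a [m [ha ->]]]; apply: gi_add.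
    apply: (@gen_ind p l _ _ (gi_0 _ _ _) (@gi_add _ _ _) _ _ ha) => a' [|i] /= hi.
      by rewrite /intR scale0r mulR0r; exact: gi_0.
    exact: (@gi_gen p l _ _ i.+1).
  rewrite -[m *: _](mulRint p); exact: (@gi_gen p l _ _ 0).
- move=> h; apply: (@gen_ind p l I _ I0 ID _ _ h) => a' [|i] /= hi; apply: IM => //.
  apply: hJI; exact: (@gi_gen1 p l _ i.+1).
Qed.
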